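(* (1) If $A$ is a finite abelian group, then $A$ has, up to isomorphism, a unique GI-extension, namely $A\rtimes C_2$ where the generator of $C_2$ acts by $a\mapsto -a$. (2) For a finite group $G$, the direct product $G\times C_2$ (with $G=G\times\{1\}$) is a GI-extension of $G$ if and only if $G$ is generated by elements of order $2$. (3) For $n\ge 2$, the symmetric group $S_n$ is a GI-extension of the alternating group $A_n$.
   Context: Given a group $G'$ with a normal subgroup $G$ of index $2$, $G'$ is called a GI-extension of $G$ if $G'$ is generated by involutions (elements of order exactly $2$) that are not contained in $G$. *)

(* Defs.v *)
From mathcomp Require Import all_boot all_fingroup all_solvable.
Set Implicit Arguments. Unset Strict Implicit. Unset Printing Implicit Defensive.
Local Open Scope group_scope.

Definition GI_ext (gT : finGroupType) (G Gp : {group gT}) : Prop :=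
  [/\ G <| Gp, #|Gp : G| = 2%N &
      Gp :=: << [set x in Gp :\: G | #[x] == 2%N] >>].

(* Main.v *)
Require Import Defs.
From HB Require Import structures.
From mathcomp Require Import all_boot all_fingroup all_solvable.
Set Implicit Arguments. Unset Strict Implicit. Unset Printing Implicit Defensive.
Local Open Scope group_scope.
Section SD.
Variable aT : finGroupType.
Definition sdT : Type := (aT * bool)%type.
HB.instance Definition _ := Finite.on sdT.
Definition iif (e : bool) (b : aT) := if e && abelian [set: aT] then b^-1 else b.

Lemma iifM e : {morph iif e : x y / x * y}.
Proof.
move=> x y; rewrite /iif; case: e => //=; case: ifP => // /centsP ab.
by rewrite invMg (ab x^-1) ?inE.
Qed.
Lemma iifV e x : iif e x^-1 = (iif e x)^-1.
Proof. by rewrite /iif; case: ifP. Qed.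
Lemma iif_xor e f x : iif (e (+) f) x = iif e (iif f x).
Proof. by rewrite /iif; case: e; case: f => //=; case: (abelian _) => //=; rewrite invgK. Qed.
Lemma iif1 e : iif e 1 = 1.
Proof. by rewrite /iif; case: ifP => //; rewrite invg1. Qed.

Definition sdmul (x y : sdT) : sdT := (x.1 * iif x.2 y.1, x.2 (+) y.2).
Definition sdone : sdT := (1, false).
Definition sdinv (x : sdT) : sdT := (iif x.2 x.1^-1, x.2).
Lemma sdmulA : associative sdmul.
Proof.
case=> a e [b f] [c g]; rewrite /sdmul /=; congr (_, _); last by rewrite addbA.
by rewrite iifM iif_xor mulgA.
Qed.
Lemma sdmul1 : left_id sdone sdmul.
Proof. by case=> a e; rewrite /sdmul /= mul1g. Qed.
Lemma sdmulV : left_inverse sdone sdinv sdmul.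
Proof.
by case=> a e; rewrite /sdmul /= -iifM mulVg iif1 addbb.
Qed.
HB.instance Definition _ := Finite_isGroup.Build sdT sdmulA sdmul1 sdmulV.

Lemma sdmulE (x y : sdT) : x * y = (x.1 * iif x.2 y.1, x.2 (+) y.2).
Proof. by []. Qed.
Lemma sdinvE (x : sdT) : x^-1 = (iif x.2 x.1^-1, x.2).
Proof. by []. Qed.
Lemma sd1E : (1 : sdT) = (1, false).
Proof. by []. Qed.
End SD.

Lemma order2P (gT : finGroupType) (x : gT) :
  (#[x] == 2%N) = (x ^+ 2 == 1) && (x != 1).
Proof.
rewrite -order_dvdn -order_eq1.
case: #[x] (order_gt0 x) => [|[|[|n]]] //= _.
Qed.

Lemma conj_exp_inv (gT : finGroupType) (A : {group gT}) (t : gT) :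
  {in A, forall a, a ^ t = a^-1} ->
  forall a i, a \in A -> a ^ (t ^+ i) = if odd i then a^-1 else a.
Proof.
move=> inv a i Aa; elim: i => [|i IH]; first by rewrite expg0 conjg1.
rewrite expgSr conjgM IH /=; case: (odd i) => /=.
  by rewrite conjVg inv // invgK.
by rewrite inv.
Qed.

Lemma GI_of_sdprod (gT : finGroupType) (A K : {group gT}) (t : gT) :
  A ><| <[t]> = K -> #[t] = 2%N -> {in A, forall a, a ^ t = a^-1} ->
  GI_ext A K.
Proof.
move=> defK ot inv.
have [nAK tK mulK nAt tiAt] := sdprod_context defK.
have t1 : t != 1 by rewrite -order_eq1 ot.
have tA : t \notin A.
  apply/negP=> At; move/setP: tiAt => /(_ t); rewrite !inE At cycle_id /=.
  by move=> e; rewrite -e in t1.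
have tt : t ^+ 2 = 1 by rewrite -ot expg_order.
have tV : t^-1 = t by apply/eqP; rewrite eq_invg_mul -expg2 tt.
split=> //.
  have := sdprod_card defK; rewrite -(Lagrange (normal_sub nAK)) -orderE ot.
  by move/eqP; rewrite eqn_mul2l (negbTE (lt0n_neq0 (cardG_gt0 A))) /= => /eqP.
have tS : t \in [set x in K :\: A | #[x] == 2%N].
  by rewrite !inE tA ot eqxx andbT /=; rewrite cycle_subG in tK.
apply/eqP; rewrite eqEsubset; apply/andP; split; last first.
  by rewrite gen_subG; apply/subsetP=> x; rewrite !inE => /andP[/andP[]].
rewrite -{1}(sdprodWY defK) join_subG cycle_subG (mem_gen tS) andbT.
apply/subsetP=> a Aa.
have atS : a * t \in [set x in K :\: A | #[x] == 2%N].
  rewrite !inE order2P; rewrite cycle_subG in tK.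
  have atA : a * t \notin A by rewrite groupMl.
  rewrite atA groupM ?(subsetP (normal_sub nAK) a Aa) //=.
  have -> : (a * t) ^+ 2 = a * a ^ t by rewrite expg2 conjgE tV !mulgA.
  rewrite inv // mulgV eqxx /=.
  by apply: contra atA => /eqP ->; rewrite group1.
by rewrite -[a](mulgK t) tV groupM ?mem_gen.
Qed.
Lemma sd_isog (gT rT : finGroupType) (A K : {group gT}) (t : gT)
  (B L : {group rT}) (u : rT) :
  A ><| <[t]> = K -> #[t] = 2%N -> {in A, forall a, a ^ t = a^-1} ->
  B ><| <[u]> = L -> #[u] = 2%N -> {in B, forall b, b ^ u = b^-1} ->
  A \isog B -> K \isog L.
Proof.
move=> defK ot invA defL ou invB /isogP[f injf imf].
have dvd : #[u] %| #[t] by rewrite ot ou.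
pose g := eltm dvd.
have actf : {in A & <[t]>, morph_act 'J 'J f g}.
  move=> a h Aa /cycleP[i ->] /=.
  have fA : f a \in B by rewrite -imf mem_morphim.
  rewrite /g eltmE (conj_exp_inv invA) // (conj_exp_inv invB) //.
  by case: (odd i) => //; rewrite morphV.
apply/isogP; exists (sdprodm defK actf).
  rewrite injm_sdprodm injf injm_eltm ot ou dvdnn /= imf im_eltm.
  by have [_ _ _ ->] := sdprodP defL.
by rewrite im_sdprodm imf im_eltm; have [_ -> _ _] := sdprodP defL.
Qed.

Lemma GI_unique (gT : finGroupType) (A K : {group gT}) :
  abelian A -> GI_ext A K ->
  exists t : gT, [/\ A ><| <[t]> = K, #[t] = 2%N
                   & {in A, forall a, a ^ t = a^-1}].
Proof.
move=> abA [nAK iK defK].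
set S := [set x in K :\: A | #[x] == 2%N] in defK.
have sAK := normal_sub nAK.
have cardK : #|K| = (#|A| * 2)%N by rewrite -iK Lagrange.
have coset2 x y : x \in K :\: A -> y \in K :\: A -> x * y^-1 \in A.
  rewrite !inE => /andP[xA xK] /andP[yA yK].
  have RA : A :* 1 \in rcosets A K by rewrite mem_rcosets (subsetP (mulG_subr A K)).
  have Rx : A :* x \in rcosets A K by rewrite mem_rcosets (subsetP (mulG_subr A K)).
  have Ry : A :* y \in rcosets A K by rewrite mem_rcosets (subsetP (mulG_subr A K)).
  have nx : A :* x != A :* 1.
    apply: contra xA => /eqP e; move: (rcoset_refl A x).
    by rewrite e mem_rcoset invg1 mulg1.
  have ny : A :* y != A :* 1.
    apply: contra yA => /eqP e; move: (rcoset_refl A y).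
    by rewrite e mem_rcoset invg1 mulg1.
  have eR : rcosets A K = [set A :* x; A :* 1].
    apply/eqP; rewrite eq_sym eqEcard cards2 nx -[#|rcosets A K|]/#|K : A| iK.
    rewrite andbT; apply/subsetP=> X; rewrite !inE => /orP[] /eqP -> //.
  move: Ry; rewrite eR !inE (negbTE ny) orbF => /eqP exy.
  by rewrite -mem_rcoset exy rcoset_refl.
case: (set_0Vmem S) => [S0 | [s sS]].
  have KA : K :=: A.
    by apply/eqP; rewrite eqEsubset sAK andbT defK S0 gen0 sub1G.
  by move: iK; rewrite KA indexgg.
have sKA : s \in K :\: A by move: sS; rewrite inE => /andP[].
have os : #[s] = 2%N by move: sS; rewrite inE => /andP[_ /eqP].
have sA : s \notin A by move: sKA; rewrite inE => /andP[].
have sK : s \in K by move: sKA; rewrite inE => /andP[].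
have ss : s ^+ 2 = 1 by rewrite -os expg_order.
have sV : s^-1 = s by apply/eqP; rewrite eq_invg_mul -expg2 ss.
have sq a : (a * s) ^+ 2 = a * a ^ s by rewrite expg2 conjgE sV !mulgA.
pose N := [set a in A | a ^ s == a^-1].
have gN : group_set N.
  apply/group_setP; split; first by rewrite inE group1 conj1g invg1 eqxx.
  move=> x y; rewrite !inE => /andP[Ax /eqP ex] /andP[Ay /eqP ey].
  rewrite groupM // conjMg ex ey invMg.
  by apply/eqP; apply: (centsP abA); rewrite groupV.
pose NG := Group gN.
have nNs : <[s]> \subset 'N(NG).
  rewrite cycle_subG inE; apply/subsetP=> y; rewrite mem_conjg sV => Ny.
  have -> : y = (y ^ s) ^ s by rewrite -conjgM -expg2 ss conjg1.
  move: Ny; rewrite !inE => /andP[Az /eqP e]; rewrite e.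
  by rewrite groupV Az /= conjVg e.
have sSN : K \subset NG <*> <[s]>.
  rewrite defK gen_subG; apply/subsetP=> x; rewrite inE => /andP[xKA /eqP ox].
  have a_in := coset2 x s xKA sKA.
  rewrite -[x](mulgKV s); apply: groupM; last first.
    by apply: (subsetP (joing_subr _ _)); apply: cycle_id.
  apply: (subsetP (joing_subl _ _)); rewrite inE a_in /=.
  move: ox => /eqP; rewrite -{1}[x](mulgKV s) order2P sq => /andP[/eqP e _].
  by rewrite eq_sym eq_invg_mul e.
have NA : (N :==: A).
  rewrite eqEcard; apply/andP; split.
    by apply/subsetP=> x; rewrite inE => /andP[].
  have := subset_leq_card sSN; rewrite norm_joinEr // cardK => le1.
  have := mul_cardG NG <[s]>; rewrite -orderE os => e2.
  rewrite -(leq_pmul2r (isT : (0 < 2)%N)); apply: (leq_trans le1).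
  rewrite /= e2; apply: leq_pmulr; exact: cardG_gt0.
exists s; split=> //; last first.
  by move=> a Aa; move: Aa; rewrite -(eqP NA) inE => /andP[_ /eqP].
have nAs : <[s]> \subset 'N(A) by rewrite cycle_subG (subsetP (normal_norm nAK)).
have tiAs : A :&: <[s]> = 1.
  apply/trivgP/subsetP=> y; rewrite inE => /andP[Ay].
  rewrite -[y \in _]/(y \in <[s]>) (cycle2g os) !inE => /orP[// | /eqP ys]; by rewrite -ys Ay in sA.
rewrite (sdprodE nAs tiAs); apply/eqP; rewrite eqEcard mul_subG ?cycle_subG //=.
by rewrite TI_cardMg // -orderE os cardK.
Qed.

Lemma GI_exists (gT : finGroupType) (A : {group gT}) : abelian A ->
  exists (rT : finGroupType) (B K : {group rT}) (t : rT),
    [/\ B \isog A, GI_ext B K, B ><| <[t]> = K, #[t] = 2%N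
     & {in B, forall b, b ^ t = b^-1}].
Proof.
move=> abA.
pose aT := subg_of A.
have abT : abelian [set: aT] by rewrite -(isog_abelian (isog_subg A)).
pose rT := sdT aT.
have inM : {in [set: aT] &, {morph (fun a : aT => (a, false) : rT) : x y / x * y}}.
  by move=> x y _ _; rewrite sdmulE.
pose f := Morphism inM.
pose B := (f @* [set: aT])%G.
have memB x : (x \in B) = ~~ x.2.
  case: x => a e; apply/morphimP/idP => [[b _ _ [_ ->]] // | /= ne].
  by exists a; rewrite ?inE //; move: ne; case: e.
pose t : rT := (1, true).
have t2 : t * t = 1 by rewrite sdmulE /= iif1 mulg1.
have t1 : t != 1 by apply/eqP => /(congr1 snd).
have ot : #[t] = 2%N by apply/eqP; rewrite order2P expg2 t2 eqxx t1.
have conj2 (x y : rT) : (x ^ y).2 = x.2.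
  by case: x => a e; case: y => b g; rewrite conjgE !sdmulE sdinvE /=; case: e; case: g.
have nBt : <[t]> \subset 'N(B).
  by rewrite cycle_subG inE; apply/subsetP=> y; rewrite mem_conjg !memB conj2.
have tiBt : B :&: <[t]> = 1.
  apply/trivgP/subsetP=> y; rewrite inE => /andP[By].
  rewrite -[y \in _]/(y \in <[t]>) (cycle2g ot) !inE => /orP[// | /eqP yt].
  by rewrite yt memB in By.
have defK : B ><| <[t]> = [set: rT].
  rewrite sdprodE //; apply/eqP; rewrite eqEsubset subsetT /=.
  apply/subsetP => -[a e] _; case: e.
    have -> : ((a, true) : rT) = ((a, false) : rT) * t by rewrite sdmulE /= iif1 mulg1.
    by apply: mem_mulg; [rewrite memB | exact: cycle_id].
  apply: (subsetP (mulG_subl _ _)).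
  by rewrite memB.
have inv : {in B, forall b, b ^ t = b^-1}.
  move=> [a e]; rewrite memB /= => /negbTE ->.
  rewrite conjgE !sdmulE !sdinvE /= /iif abT /=.
  by rewrite !(invg1, mulg1, mul1g).
exists rT, B, [set: rT]%G, t; split=> //; last exact: GI_of_sdprod defK ot inv.
rewrite isog_sym; apply: isog_trans (isog_subg A) _.
apply/isogP; exists f => //; apply/injmP => x y _ _; by move/(congr1 fst).
Qed.

Lemma part3 (n : nat) : (2 <= n)%N -> GI_ext ('Alt_('I_n))%G ('Sym_('I_n))%G.
Proof.
move=> n2; split; first exact: Alt_normal.
  by apply: Alt_index; rewrite card_ord.
apply/eqP; rewrite eqEsubset; apply/andP; split; last first.
  by rewrite gen_subG; apply/subsetP=> x; rewrite !inE => /andP[/andP[]].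
apply/subsetP=> s _; have [ts -> dts] := prod_tpermP s.
rewrite big_seq_cond; apply: group_prod => -[x y] /andP[xyts _] /=.
apply: mem_gen; have xy : x != y by move/allP: dts => /(_ _ xyts).
rewrite inE in_setD Alt_even odd_tperm xy inE /= order2P expg2 tperm2 eqxx /=.
apply/eqP=> /(congr1 (fun p : {perm 'I_n} => p x)); rewrite tpermL perm1.
by move/eqP; rewrite eq_sym (negbTE xy).
Qed.

Lemma part2 (gT cT : finGroupType) (G : {group gT}) (C : {group cT}) :
  #|C| = 2%N ->
  (GI_ext (setX G 1) (setX G C) <-> G :=: << [set x in G | #[x] == 2%N] >>).
Proof.
move=> oC.
have [c0 c0C] : exists c0, c0 \in C :\ 1.
  apply/set0Pn; apply/eqP=> e; move: oC; rewrite (cardsD1 1) e cards0 group1.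
  by [].
have c01 : c0 != 1 by move: c0C; rewrite !inE => /andP[].
have Cc0 : c0 \in C by move: c0C; rewrite !inE => /andP[].
have eC : C :=: [set 1; c0].
  apply/eqP; rewrite eq_sym eqEcard cards2 eq_sym c01 oC leqnn andbT.
  by apply/subsetP=> x; rewrite !inE => /orP[] /eqP ->.
have c02 : c0 ^+ 2 = 1.
  by apply/eqP; rewrite -order_dvdn -oC order_dvdG.
set S := [set x in setX G C :\: setX G 1 | #[x] == 2%N].
set I := [set x in G | #[x] == 2%N].
have memS g c : ((g, c) \in S) = [&& g \in G, c == c0 & g ^+ 2 == 1].
  have e1 : forall (a : gT) (b : cT), ((a, b) == 1) = (a == 1) && (b == 1) by [].
  rewrite !inE /= order2P expg2.
  rewrite -[(g, c) * (g, c)]/(g * g, c * c) -!expg2.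
  case: (eqVneq c c0) => [-> | nc] /=.
    rewrite Cc0 c02 !e1 (negbTE c01) eqxx andbF andbT /=.
    by rewrite andbT andbF andbT.
  rewrite eC !inE; case: (eqVneq c 1) => [-> | c1] /=; last by rewrite (negbTE nc) !andbF.
  by case: (g \in G).
split.
  case=> _ _ defK; apply/eqP; rewrite eqEsubset; apply/andP; split; last first.
    by rewrite gen_subG; apply/subsetP=> x; rewrite inE => /andP[].
  apply/subsetP=> g Gg.
  have gK : (g, 1) \in setX G C by rewrite in_setX Gg group1.
  rewrite defK in gK.
  have : g \in [morphism of @fst gT cT] @* <<S>>.
    by apply/morphimP; exists (g, 1); rewrite ?inE.
  rewrite morphim_gen ?subsetT //; apply: subsetP; rewrite gen_subG.
  apply/subsetP=> y /morphimP[[h c] _ hcS ->] /=.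
  move: hcS; rewrite memS => /and3P[Gh _ h2].
  have [-> | h1] := eqVneq h 1; first exact: group1.
  by apply: mem_gen; rewrite inE Gh order2P h2 h1.
move=> defG.
have sub : setX G 1 \subset setX G C by rewrite setXS ?sub1G.
have idx : #|setX G C : setX G 1| = 2%N.
  have := Lagrange sub; rewrite !cardsX cards1 muln1 oC => /eqP.
  by rewrite eqn_mul2l (negbTE (lt0n_neq0 (cardG_gt0 G))) /= => /eqP.
split=> //; first exact: index2_normal.
have c0S : (1, c0) \in S by rewrite memS group1 eqxx expg1n eqxx.
apply/eqP; rewrite eqEsubset; apply/andP; split; last first.
  by rewrite gen_subG; apply/subsetP=> x; rewrite !inE => /andP[/andP[]].
have g1S : forall g, g \in G -> (g, 1) \in <<S>>.
  move=> g Gg.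
  have : g \in <<I>> by rewrite -defG.
  move/(mem_morphim (pairg1_morphism gT cT) (in_setT _)).
  rewrite morphim_gen ?subsetT //; apply: subsetP; rewrite gen_subG.
  apply/subsetP=> y /morphimP[h _ hI ->].
  move: hI; rewrite inE order2P => /andP[Gh /andP[h2 _]].
  have -> : pairg1_morphism gT cT h = (h, c0) * (1, c0).
    by rewrite -[(h, c0) * (1, c0)]/(h * 1, c0 * c0) -expg2 c02 mulg1.
  by rewrite groupM ?mem_gen // memS Gh eqxx h2.
apply/subsetP=> -[g c]; rewrite in_setX => /andP[Gg Cc].
have -> : (g, c) = (g, 1) * (1, c) by rewrite -[(g, 1) * (1, c)]/(g * 1, 1 * c) mulg1 mul1g.
rewrite groupM ?g1S //; move: Cc; rewrite eC !inE => /orP[/eqP -> | /eqP ->].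
  exact: group1.
exact: mem_gen.
Qed.

Theorem mainTheorem2 :
  (* (1) finite abelian A: a GI-extension exists, every GI-extension is
     A ><| C_2 with the generator acting by inversion, and it is unique up to
     isomorphism. *)
  (forall (gT : finGroupType) (A : {group gT}), abelian A ->
     (exists (rT : finGroupType) (B K : {group rT}) (t : rT),
        [/\ B \isog A, GI_ext B K, B ><| <[t]> = K, #[t] = 2%N
          & {in B, forall b, b ^ t = b^-1}])
     /\ (forall K : {group gT}, GI_ext A K ->
          exists t : gT, [/\ A ><| <[t]> = K, #[t] = 2%N
                           & {in A, forall a, a ^ t = a^-1}])
     /\ (forall (rT : finGroupType) (B K : {group rT}) (K' : {group gT}),
           B \isog A -> GI_ext B K -> GI_ext A K' -> K \isog K'))
  /\
  (* (2) G x C_2 is a GI-extension of G x 1 iff G is generated by involutions *)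
  (forall (gT cT : finGroupType) (G : {group gT}) (C : {group cT}),
     #|C| = 2%N ->
     (GI_ext (setX G 1) (setX G C) <->
      G :=: << [set x in G | #[x] == 2%N] >>))
  /\
  (* (3) S_n is a GI-extension of A_n for n >= 2 *)
  (forall n : nat, (2 <= n)%N -> GI_ext ('Alt_('I_n))%G ('Sym_('I_n))%G).
Proof.
split; [|split].
- move=> gT A abA; split; first exact: GI_exists.
  split; first by move=> K; exact: GI_unique.
  move=> rT B K K' isoBA gB gA.
  have abB : abelian B by rewrite (isog_abelian isoBA).
  have [t [dK ot it]] := GI_unique abB gB.
  have [u [dK' ou iu]] := GI_unique abA gA.
  exact: sd_isog dK ot it dK' ou iu isoBA.
- by move=> gT cT G C; exact: part2.
- exact: part3.
Qed.
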